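(* Let $K$ be $\mathbb{Q}$ or an imaginary quadratic field with ring of integers $R$, let $M=\begin{pmatrix}\alpha&\beta\\ \overline{\beta}&\gamma\end{pmatrix}\in R^{2\times 2}$ be positive definite hermitian, with $\det M=\Delta\varepsilon$ as in the context, and let $\lambda=\nu\Delta$ for a positive integer $\nu$. Then: (1) If $(a_1,a_2)\in R^2\times R^2$ is a $Q$-orthobalanced basis of norm $\lambda$ and $\delta\in K$ satisfies $a_2=(Ma_1)_\perp/\delta$, then $\nu\delta\in R$. (2) For $\delta\in\frac1\nu R$ with $|\delta|^2=\Delta$, there exists a $Q$-orthobalanced basis in $R^2\times R^2$ of norm $\lambda$ and type $\delta$ if and only if there exist $u,v\in S$ with $uv=\nu(\beta+\delta\sqrt{\varepsilon}\,j)$, $|u|^2=\alpha\nu$ and $|v|^2=\gamma\nu$. (3) If $K$ has class number one, then every $a_1\in R^2$ with $Q(a_1)=\lambda$ can be extended to a $Q$-orthobalanced basis $(a_1,a_2)\in R^2\times R^2$ of norm $\lambda$.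
   Context: $Q(v)=v^*Mv$. A rational number is an absolute square in $K$ if it equals $|y|^2$ for some $y\in K$; $\det M=\Delta\varepsilon$ with $\Delta\in\mathbb{Q}$ an absolute square in $K$ and $\varepsilon$ a positive integer whose only positive divisor that is an absolute square in $K$ is $1$. A pair $(a_1,a_2)$ is a $Q$-orthobalanced basis of norm $\lambda$ if $A^*MA=\lambda\,\mathrm{diag}(1,\varepsilon)$ for $A=(a_1|a_2)$; it is of type $\delta$ if $a_2=(Ma_1)_\perp/\delta$ where $(x,y)^T_\perp:=(-\overline{y},\overline{x})^T$. $K\subseteq\mathbb{C}$ with $\mathbb{C}=\mathbb{R}+\mathbb{R}i$ embedded in the Hamilton quaternions $\mathbb{H}$; $S:=\{r+s\sqrt{\varepsilon}\,j: r,s\in R\}\subseteq\mathbb{H}$, and $|\cdot|$ is the quaternion norm. *)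

(* Defs.v *)
From mathcomp Require Import all_boot all_order all_algebra algC algnum.
Set Implicit Arguments. Unset Strict Implicit. Unset Printing Implicit Defensive.
Import Order.TTheory GRing.Theory Num.Theory.
Local Open Scope ring_scope.

(* Parameter D : int encodes K = Q(sqrt D):  D = 1 gives K = Q,
   D < 0 squarefree gives the imaginary quadratic field Q(sqrt D). *)
Definition sqfree (n : nat) : Prop := forall p : nat, prime p -> ~~ (p ^ 2 %| n)%N.
Definition admissible_param (D : int) : Prop :=
  D = 1 \/ (D < 0 /\ sqfree `|D|%N).

Definition inK (D : int) (x : algC) : Prop :=
  exists a b : rat, x = ratr a + ratr b * sqrtC (D%:~R).

Definition inR (D : int) (x : algC) : Prop := inK D x /\ x \in Aint.

Definition abs_square (D : int) (q : rat) : Prop :=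
  exists y : algC, inK D y /\ ratr q = `|y| ^+ 2.

Definition ideal_of (D : int) (I : algC -> Prop) : Prop :=
  [/\ forall x, I x -> inR D x, I 0,
      forall x y, I x -> I y -> I (x + y) &
      forall r x, inR D r -> I x -> I (r * x)].
Definition class_number_one (D : int) : Prop :=
  forall I, ideal_of D I ->
    exists g, inR D g /\ forall x, I x <-> exists r, inR D r /\ x = g * r.

Definition ctr (m n : nat) (A : 'M[algC]_(m, n)) : 'M[algC]_(n, m) :=
  (map_mx Num.conj A)^T.

Definition vecR (D : int) (v : 'cV[algC]_2) : Prop := forall i, inR D (v i 0).
Definition matR (D : int) (M : 'M[algC]_2) : Prop := forall i j, inR D (M i j).

Definition is_hermitian (M : 'M[algC]_2) : Prop := ctr M = M.
Definition pos_def (M : 'M[algC]_2) : Prop :=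
  forall v : 'cV[algC]_2, v != 0 -> 0 < (ctr v *m M *m v) 0 0.

Definition Qform (M : 'M[algC]_2) (v : 'cV[algC]_2) : algC := (ctr v *m M *m v) 0 0.

Definition orthobalanced (M : 'M[algC]_2) (eps lam : algC) (a1 a2 : 'cV[algC]_2) : Prop :=
  let A := row_mx a1 a2 in
  ctr A *m M *m A = lam *: diag_mx (\row_(i < 2) if i == 0 then 1 else eps).

Definition perp (v : 'cV[algC]_2) : 'cV[algC]_2 :=
  \col_(i < 2) if i == 0 then - (v 1 0)^* else (v 0 0)^*.

Definition of_type (M : 'M[algC]_2) (delta : algC) (a1 a2 : 'cV[algC]_2) : Prop :=
  a2 = delta^-1 *: perp (M *m a1).

(* Hamilton quaternions as pairs (z, w) representing z + w j with z, w in C,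
   using j z = conj(z) j and j^2 = -1. *)
Definition quat := (algC * algC)%type.
Definition qmul (p q : quat) : quat :=
  (p.1 * q.1 - p.2 * q.2^*, p.1 * q.2 + p.2 * q.1^*).
Definition qnorm2 (p : quat) : algC := `|p.1| ^+ 2 + `|p.2| ^+ 2.

Definition inS (D : int) (eps : nat) (u : quat) : Prop :=
  exists r s, inR D r /\ inR D s /\ u = (r, s * sqrtC (eps%:R)).

(* Main.v *)
Require Import Defs.
From mathcomp Require Import all_boot all_order all_algebra algC algnum ring.
Import Order.TTheory GRing.Theory Num.Theory.
Set Implicit Arguments. Unset Strict Implicit. Unset Printing Implicit Defensive.
Local Open Scope ring_scope.

Lemma det2 (M : 'M[algC]_2) : \det M = M 0 0 * M 1 1 - M 0 1 * M 1 0.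
Proof.
rewrite (expand_det_row _ 0) !big_ord_recl big_ord0 /cofactor !det_mx11 /=.
rewrite !mxE /=.
try have -> : (lift 0 0 : 'I_2) = 1 by apply/val_inj.
try have -> : (lift ord0 0 : 'I_2) = 1 by apply/val_inj.
try have -> : (lift ord0 ord0 : 'I_2) = 1 by apply/val_inj.
try have -> : (lift 1 0 : 'I_2) = 0 by apply/val_inj.
try have -> : (ord0 : 'I_2) = 0 by apply/val_inj.
rewrite /= expr0 expr1; ring.
Qed.

Lemma sum2 (F : 'I_2 -> algC) : \sum_i F i = F 0 + F 1.
Proof.
rewrite !big_ord_recl big_ord0 addr0.
have -> : (ord0 : 'I_2) = 0 by apply/val_inj.
by have -> : (lift ord0 ord0 : 'I_2) = 1 by apply/val_inj.
Qed.

Lemma ord2P (P : 'I_2 -> Prop) : P 0 -> P 1 -> forall i, P i.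
Proof.
move=> h0 h1 [[|[|//]] Hi].
  by have -> : Ordinal Hi = 0 by apply/val_inj.
by have -> : Ordinal Hi = 1 by apply/val_inj.
Qed.

Lemma ord2_cases (i : 'I_2) : i = 0 \/ i = 1.
Proof. by apply: (@ord2P (fun i => i = 0 \/ i = 1)); [left|right]. Qed.

Lemma ctrE m n (A : 'M[algC]_(m, n)) i j : ctr A i j = (A j i)^*.
Proof. by rewrite /ctr !mxE. Qed.

Definition Q2 (M : 'M[algC]_2) (u0 u1 v0 v1 : algC) :=
  u0^* * (M 0 0 * v0 + M 0 1 * v1) + u1^* * (M 1 0 * v0 + M 1 1 * v1).

Lemma prodE m n (M : 'M[algC]_2) (A : 'M[algC]_(2, m)) (B : 'M[algC]_(2, n)) i j :
  (ctr A *m M *m B) i j = Q2 M (A 0 i) (A 1 i) (B 0 j) (B 1 j).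
Proof.
rewrite mxE sum2 !mxE !sum2 !ctrE /Q2; ring.
Qed.

Lemma MvE (M : 'M[algC]_2) (a : 'cV[algC]_2) i : (M *m a) i 0 = M i 0 * a 0 0 + M i 1 * a 1 0.
Proof. by rewrite mxE sum2. Qed.

Lemma obP M e l (a1 a2 : 'cV[algC]_2) :
  orthobalanced M e l a1 a2 <->
  [/\ Q2 M (a1 0 0) (a1 1 0) (a1 0 0) (a1 1 0) = l,
      Q2 M (a1 0 0) (a1 1 0) (a2 0 0) (a2 1 0) = 0,
      Q2 M (a2 0 0) (a2 1 0) (a1 0 0) (a1 1 0) = 0 &
      Q2 M (a2 0 0) (a2 1 0) (a2 0 0) (a2 1 0) = l * e].
Proof.
have E0 : (0 : 'I_(1+1)) = lshift 1 0 by apply/val_inj.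
have E1 : (1 : 'I_(1+1)) = rshift 1 0 by apply/val_inj.
have S0 : split (0 : 'I_(1+1)) = inl 0.
  by rewrite E0 -[lshift 1 0]/(unsplit (inl 0)) unsplitK.
have S1 : split (1 : 'I_(1+1)) = inr 0.
  by rewrite E1 -[rshift 1 0]/(unsplit (inr 0)) unsplitK.
rewrite /orthobalanced; split.
  move/matrixP=> H.
  have := H 0 0; have := H 0 1; have := H 1 0; have := H 1 1.
  rewrite !prodE !mxE /= S0 S1 /= mulr0n mulr1n mulr1 mulr0.
  by move=> -> -> -> ->.
case=> h1 h2 h3 h4.
apply/matrixP=> i j.
case: (ord2_cases i) => ->; case: (ord2_cases j) => ->; rewrite !prodE !mxE /=;
  rewrite /= ?S0 ?S1 /= ?mulr0n ?mulr1n ?mulr1 ?mulr0 //.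
Qed.

Lemma cD (x y : algC) : (x + y)^* = x^* + y^*. Proof. exact: rmorphD. Qed.
Lemma cB (x y : algC) : (x - y)^* = x^* - y^*. Proof. exact: rmorphB. Qed.
Lemma cN (x : algC) : (- x)^* = - x^*. Proof. exact: rmorphN. Qed.
Lemma cM (x y : algC) : (x * y)^* = x^* * y^*. Proof. exact: rmorphM. Qed.
Lemma cV (x : algC) : (x^-1)^* = (x^*)^-1. Proof. exact: fmorphV. Qed.
Lemma cK (x : algC) : (x^*)^* = x. Proof. exact: conjCK. Qed.
Lemma c0 : (0 : algC)^* = 0. Proof. exact: rmorph0. Qed.
Lemma c1 : (1 : algC)^* = 1. Proof. exact: rmorph1. Qed.
Lemma cn (n : nat) : (n%:R : algC)^* = n%:R. Proof. exact: conjC_nat. Qed.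
Lemma cratr (q : rat) : (ratr q : algC)^* = ratr q.
Proof. by apply: conj_Crat; apply: Crat_rat. Qed.
Definition cE := (cratr, cn, cD, cB, cN, cM, cV, cK, c0, c1).

Lemma conj_sqrtD (D : int) :
  (sqrtC (D%:~R : algC))^* = sqrtC D%:~R \/ (sqrtC (D%:~R : algC))^* = - sqrtC D%:~R.
Proof.
set s := sqrtC _.
have : (s^* - s) * (s^* + s) = 0.
  have h : s^* ^+ 2 = s ^+ 2 by rewrite -rmorphXn /s sqrtCK rmorph_int.
  by rewrite -subr_sqr h subrr.
move/eqP; rewrite mulf_eq0 => /orP[/eqP h|/eqP h]; [left|right].
  by apply/eqP; rewrite -subr_eq0 h.
by apply/eqP; rewrite -addr_eq0 h.
Qed.

Lemma sqrtD_sq (D : int) : sqrtC (D%:~R : algC) * sqrtC D%:~R = D%:~R.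
Proof. by rewrite -expr2 sqrtCK. Qed.

Lemma inK_add D x y : inK D x -> inK D y -> inK D (x + y).
Proof.
case=> a [b ->] [c [d ->]]; exists (a + c), (b + d).
by rewrite !rmorphD /=; ring.
Qed.

Lemma inK_opp D x : inK D x -> inK D (- x).
Proof.
case=> a [b ->]; exists (- a), (- b).
by rewrite !rmorphN /=; ring.
Qed.

Lemma inK_mul D x y : inK D x -> inK D y -> inK D (x * y).
Proof.
case=> a [b ->] [c [d ->]]; exists (a * c + b * d * D%:~R), (a * d + b * c).
rewrite !rmorphD !rmorphM /= ratr_int.
have ss := sqrtD_sq D; set s := sqrtC _ in ss *; rewrite -ss; ring.
Qed.

Lemma inK_rat D q : inK D (ratr q).
Proof. by exists q, 0; rewrite rmorph0 mul0r addr0. Qed.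

Lemma inK_int D (z : int) : inK D z%:~R.
Proof. by have := inK_rat D z%:~R; rewrite ratr_int. Qed.

Lemma inK_nat D (n : nat) : inK D n%:R.
Proof. by have := inK_int D n; rewrite -pmulrn. Qed.


Lemma inK_conj D x : inK D x -> inK D x^*.
Proof.
case=> a [b ->].
case: (conj_sqrtD D) => h.
  by exists a, b; rewrite !cE h.
by exists a, (- b); rewrite !cE h rmorphN /=; ring.
Qed.

Lemma inK_sqrt D : inK D (sqrtC D%:~R).
Proof. by exists 0, 1; rewrite rmorph0 rmorph1 add0r mul1r. Qed.

Lemma inR_add D x y : inR D x -> inR D y -> inR D (x + y).
Proof. by case=> h1 h2 [h3 h4]; split; [apply: inK_add|apply: rpredD]. Qed.
Lemma inR_opp D x : inR D x -> inR D (- x).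
Proof. by case=> h1 h2; split; [apply: inK_opp|rewrite rpredN]. Qed.
Lemma inR_sub D x y : inR D x -> inR D y -> inR D (x - y).
Proof. by move=> h1 h2; apply: inR_add => //; apply: inR_opp. Qed.
Lemma inR_mul D x y : inR D x -> inR D y -> inR D (x * y).
Proof. by case=> h1 h2 [h3 h4]; split; [apply: inK_mul|apply: rpredM]. Qed.
Lemma inR_conj D x : inR D x -> inR D x^*.
Proof. by case=> h1 h2; split; [apply: inK_conj|rewrite (Aint_aut Num.conj_op)]. Qed.
Lemma inR_int D (z : int) : inR D z%:~R.
Proof. by split; [apply: inK_int|apply: rpred_int]. Qed.
Lemma inR_nat D (n : nat) : inR D n%:R.
Proof. by have := inR_int D n; rewrite -pmulrn. Qed.
Lemma inR_0 D : inR D 0.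
Proof. exact: (inR_nat D 0). Qed.
Lemma inR_1 D : inR D 1.
Proof. exact: (inR_nat D 1). Qed.
Lemma inR_sqrt D : inR D (sqrtC D%:~R).
Proof.
split; first exact: inK_sqrt.
apply: (@root_monic_Aint ('X^2 - (D%:~R)%:P)).
- by rewrite /root !hornerE sqrtCK subrr.
- exact: monicXnsubC.
- by rewrite polyOverXnsubC rpred_int.
Qed.

Lemma herm_facts M : is_hermitian M ->
  [/\ (M 0 0)^* = M 0 0, (M 1 1)^* = M 1 1 & M 1 0 = (M 0 1)^*].
Proof.
move/matrixP=> H; split.
- by have := H 0 0; rewrite ctrE.
- by have := H 1 1; rewrite ctrE.
- by have := H 0 1; rewrite ctrE => <-; rewrite cK.
Qed.

Lemma perpE (v : 'cV[algC]_2) :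
  perp v 0 0 = - (v 1 0)^* /\ perp v 1 0 = (v 0 0)^*.
Proof. by rewrite /perp !mxE. Qed.

Lemma scaleE (c : algC) (v : 'cV[algC]_2) i : (c *: v) i 0 = c * v i 0.
Proof. by rewrite mxE. Qed.

Lemma Q2E M u0 u1 v0 v1 : is_hermitian M ->
  Q2 M u0 u1 v0 v1 = u0^* * (M 0 0 * v0 + M 0 1 * v1) + u1^* * ((M 0 1)^* * v0 + M 1 1 * v1).
Proof. by case/herm_facts=> _ _ h; rewrite /Q2 h. Qed.

Lemma gen_ob M Dl e lam (a1 a2 : 'cV[algC]_2) c :
  is_hermitian M -> \det M = Dl * e ->
  Q2 M (a1 0 0) (a1 1 0) (a1 0 0) (a1 1 0) = lam ->
  a2 = c *: perp (M *m a1) -> c * c^* * Dl = 1 ->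
  orthobalanced M e lam a1 a2.
Proof.
move=> Hh Hd HQ -> Hc.
have [ha hg hb] := herm_facts Hh.
apply/obP; rewrite !scaleE (perpE _).1 (perpE _).2 !MvE hb.
move: HQ; rewrite /Q2 hb => HQ.
split => //.
- by rewrite !cE ?ha ?hg; ring.
- by rewrite !cE ?ha ?hg; ring.
rewrite -HQ.
transitivity (c * c^* * \det M * ((a1 0 0)^* * (M 0 0 * a1 0 0 + M 0 1 * a1 1 0) +
   (a1 1 0)^* * ((M 0 1)^* * a1 0 0 + M 1 1 * a1 1 0))).
  rewrite det2 hb !cE ?ha ?hg; ring.
by rewrite Hd mulrA Hc mul1r mulrC.
Qed.

Lemma posdef_det M : is_hermitian M -> pos_def M -> \det M != 0.
Proof.
move=> Hh Hp; apply/negP => /eqP Hd.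
have [ha hg hb] := herm_facts Hh.
rewrite det2 in Hd.
pose v : 'cV[algC]_2 := \col_i (if i == 0 then M 1 1 else - M 1 0).
have [vz|vnz] := eqVneq v 0.
  have g0 : M 1 1 = 0 by move/matrixP: vz => /(_ 0 0); rewrite /v !mxE.
  pose u : 'cV[algC]_2 := \col_i (if i == 0 then 0 else 1).
  have unz : u != 0.
    apply/negP => /eqP/matrixP/(_ 1 0); rewrite /u !mxE /=.
    by move/eqP; rewrite oner_eq0.
  have := Hp u unz; rewrite prodE /u !mxE /= /Q2 g0 !cE.
  by rewrite !mul0r !mulr0 !add0r mul1r ltxx.
have := Hp v vnz; rewrite prodE /v !mxE /= /Q2 hb !cE ?ha ?hg.
have -> : (M 1 1 * (M 0 0 * M 1 1 + M 0 1 * - (M 0 1)^*) +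
  - M 0 1 * ((M 0 1)^* * M 1 1 + M 1 1 * - (M 0 1)^*)) = M 1 1 * (M 0 0 * M 1 1 - M 0 1 * M 1 0).
  by rewrite hb; ring.
by rewrite Hd mulr0 ltxx.
Qed.

Lemma Q2_perp M (a1 : 'cV[algC]_2) c : is_hermitian M ->
  Q2 M ((c *: perp (M *m a1)) 0 0) ((c *: perp (M *m a1)) 1 0)
       ((c *: perp (M *m a1)) 0 0) ((c *: perp (M *m a1)) 1 0)
  = c * c^* * \det M * Q2 M (a1 0 0) (a1 1 0) (a1 0 0) (a1 1 0).
Proof.
move=> Hh; have [ha hg hb] := herm_facts Hh.
rewrite !scaleE (perpE _).1 (perpE _).2 !MvE det2 /Q2 hb !cE ?ha ?hg; ring.
Qed.

Lemma ideal2 D u v : inR D u -> inR D v ->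
  ideal_of D (fun z => exists X Y, [/\ inR D X, inR D Y & z = X * u + Y * v]).
Proof.
move=> hu hv; split.
- by move=> z [X [Y [hX hY ->]]]; apply: inR_add; apply: inR_mul.
- by exists 0, 0; split; [exact: inR_0|exact: inR_0|rewrite !mul0r addr0].
- move=> x y [X [Y [hX hY ->]]] [X' [Y' [hX' hY' ->]]].
  by exists (X + X'), (Y + Y'); split; [exact: inR_add|exact: inR_add|ring].
- move=> r x hr [X [Y [hX hY ->]]].
  by exists (r * X), (r * Y); split; [exact: inR_mul|exact: inR_mul|ring].
Qed.

Lemma vecR_col D (f : 'I_2 -> algC) : inR D (f 0) -> inR D (f 1) ->
  vecR D (\col_i f i).
Proof. by move=> h0 h1 i; rewrite mxE; case: (ord2_cases i) => ->. Qed.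

Unset Implicit Arguments.

Ltac rsolve := repeat (first [ assumption | apply: inR_add | apply: inR_mul | apply: inR_opp
   | apply: inR_conj | apply: inR_nat ]).

Ltac fside := rewrite ?fmorph_eq0; repeat (apply/andP; split); try done.

Theorem mainTheorem11 (D : int) (M : 'M[algC]_2) (Delta : rat) (eps nu : nat) :
  admissible_param D ->
  matR D M -> is_hermitian M -> pos_def M ->
  abs_square D Delta ->
  (0 < eps)%N ->
  (forall m : nat, (0 < m)%N -> (m %| eps)%N -> abs_square D m%:Q -> m = 1%N) ->
  \det M = ratr Delta * eps%:R ->
  (0 < nu)%N ->
  let lam := nu%:R * ratr Delta in
  let alpha := M 0 0 in
  let beta := M 0 1 in
  let gamma := M 1 1 in
  (* (1) *)
  (forall (a1 a2 : 'cV[algC]_2) (delta : algC),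
      vecR D a1 -> vecR D a2 -> orthobalanced M eps%:R lam a1 a2 ->
      inK D delta -> of_type M delta a1 a2 ->
      inR D (nu%:R * delta))
  /\
  (* (2) *)
  (forall delta : algC,
      inR D (nu%:R * delta) -> `|delta| ^+ 2 = ratr Delta ->
      ((exists a1 a2 : 'cV[algC]_2,
          [/\ vecR D a1, vecR D a2, orthobalanced M eps%:R lam a1 a2
            & of_type M delta a1 a2])
       <->
       (exists u v : quat,
          [/\ inS D eps u, inS D eps v,
              qmul u v = (nu%:R * beta, nu%:R * (delta * sqrtC eps%:R)),
              qnorm2 u = alpha * nu%:R & qnorm2 v = gamma * nu%:R])))
  /\
  (* (3) *)
  (class_number_one D ->
   forall a1 : 'cV[algC]_2, vecR D a1 -> Qform M a1 = lam ->
     exists a2 : 'cV[algC]_2, vecR D a2 /\ orthobalanced M eps%:R lam a1 a2).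
Proof.
move=> _ HM Hh Hp Hsq He _ Hdet Hnu lam alpha beta gamma.
have [ha hg hb] := herm_facts Hh.
have Hdet0 := posdef_det Hh Hp.
set Dl := ratr Delta in Hdet *.
have lamE : lam = nu%:R * Dl by [].
have Dl0 : Dl != 0 by apply: contraNneq Hdet0 => h; rewrite Hdet h mul0r.
have Delta0 : Delta != 0 by apply: contraNneq Dl0 => h; rewrite /Dl h rmorph0.
have Dlc : Dl^* = Dl by rewrite /Dl cratr.
have e0 : (eps%:R : algC) != 0 by rewrite pnatr_eq0 -lt0n.
have nu0 : (nu%:R : algC) != 0 by rewrite pnatr_eq0 -lt0n.
have lam0 : lam != 0 by rewrite /lam mulf_neq0.
have hdt : M 0 0 * M 1 1 - M 0 1 * (M 0 1)^* != 0 by rewrite -hb -det2.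
have Mx : forall i j, inR D (M i j) by [].
split.
  move=> a1 a2 d Ha1 Ha2 Hob _ Ht.
  have [h11 _ _ h22] := (obP _ _ _ _ _).1 Hob.
  have d0 : d != 0.
    apply: contra_eqN h22 => /eqP d0.
    rewrite Ht d0 invr0 scale0r !mxE /Q2 !cE !mulr0 !add0r eq_sym.
    by rewrite !mul0r addr0 mulf_neq0.
  have Hdd : d * d^* = Dl.
    move: h22; rewrite Ht Q2_perp // h11 Hdet => h.
    have h' : d^-1 * (d^-1)^* * Dl = 1.
      apply: (mulIf (mulf_neq0 lam0 e0)); rewrite mul1r -{2}h; ring.
    have dc0 : d^* != 0 by rewrite conjC_eq0.
    transitivity (d * d^* * (d^-1 * (d^-1)^* * Dl)); first by rewrite h' mulr1.
    by rewrite cV; field; rewrite ?fmorph_eq0 d0.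
  have -> : nu%:R * d = (a1 0 0)^* * (a2 1 0)^* - (a1 1 0)^* * (a2 0 0)^*.
    have dc0 : d^* != 0 by rewrite conjC_eq0.
    rewrite Ht !scaleE (perpE _).1 (perpE _).2 !MvE.
    transitivity ((d^*)^-1 * Q2 M (a1 0 0) (a1 1 0) (a1 0 0) (a1 1 0)).
      by rewrite h11 lamE -Hdd; field; fside.
    by rewrite /Q2 !cE; ring.
  have Ha : forall i, inR D (a1 i 0) by move=> i; apply: Ha1.
  have Hb : forall i, inR D (a2 i 0) by move=> i; apply: Ha2.
  by apply: inR_sub; apply: inR_mul; apply: inR_conj.
split.
  move=> d Hnd Hdd.
  rewrite normCK in Hdd.
  have d0 : d != 0 by apply: contraNneq Dl0 => h; rewrite -Hdd h mul0r.
  have dc0 : d^* != 0 by rewrite conjC_eq0.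
  have sse : sqrtC eps%:R * sqrtC eps%:R = eps%:R :> algC by rewrite -expr2 sqrtCK.
  have sec : (sqrtC eps%:R)^* = sqrtC eps%:R :> algC.
    by apply: conj_Creal; apply: sqrtC_real; rewrite ler0n.
  have se0 : sqrtC eps%:R != 0 :> algC by apply: contraNneq e0 => h; rewrite -sse h mul0r.
  set se := sqrtC eps%:R in sse sec se0 *.
  rewrite /alpha /beta /gamma.
  split.
  - case=> a1 [a2 [Ha1 Ha2 Hob Ht]].
    have [h11 _ _ _] := (obP _ _ _ _ _).1 Hob.
    have Ha i : inR D (a1 i 0) by apply: Ha1.
    have Hb i : inR D (a2 i 0) by apply: Ha2.
    exists ((a2 1 0)^*, (a1 1 0)^* * se), (- a2 0 0, (a1 0 0)^* * se).
    have Hnu' : nu%:R = Q2 M (a1 0 0) (a1 1 0) (a1 0 0) (a1 1 0) / Dl.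
      by rewrite h11 lamE mulfK.
    have HDl : Dl = (M 0 0 * M 1 1 - M 0 1 * (M 0 1)^*) / (se * se).
      by rewrite -hb -det2 Hdet sse mulfK.
    have Hdc : d^* = Dl / d by rewrite -Hdd [d * _]mulrC mulfK.
    split.
    + exists (a2 1 0)^*, (a1 1 0)^*.
      by split; [apply: inR_conj | split => //; apply: inR_conj].
    + exists (- a2 0 0), (a1 0 0)^*.
      by split; [apply: inR_opp | split => //; apply: inR_conj].
    + rewrite /qmul /= Ht !scaleE (perpE _).1 (perpE _).2 !MvE /=.
      rewrite Hnu' /Q2 hb !cE ?ha ?hg ?sec Hdc HDl.
      by congr (_, _); field; fside.
    + rewrite /qnorm2 /= !normCK Ht !scaleE ?(perpE _).1 ?(perpE _).2 !MvE /=.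
      rewrite Hnu' /Q2 hb !cE ?ha ?hg ?sec Hdc HDl.
      by field; fside.
    + rewrite /qnorm2 /= !normCK Ht !scaleE ?(perpE _).1 ?(perpE _).2 !MvE /=.
      rewrite Hnu' /Q2 hb !cE ?ha ?hg ?sec Hdc HDl.
      by field; fside.
  - case=> u [v [[p [s [Hp1 [Hs Hu0]]]] [q [t [Hq [Ht Hv0]]]] Hm Hu Hv]].
    rewrite -/se in Hu0 Hv0; subst u v.
    move: Hm; rewrite /qmul /= => -[H1 H2].
    move: Hu Hv; rewrite /qnorm2 /= !normCK => Hu Hv.
    have H1' : M 0 1 = (p * q - eps%:R * s * t^*) / nu%:R.
      by rewrite -[M 0 1](mulKf nu0) -H1 !cE sec -sse; field.
    have H2' : d = (p * t + s * q^*) / nu%:R.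
      rewrite -[d](mulfK se0) -[d * se](mulKf nu0) -H2; field; fside.
    have Ha' : M 0 0 = (p * p^* + eps%:R * s * s^*) / nu%:R.
      by rewrite -[M 0 0](mulfK nu0) -Hu !cE sec -sse; field.
    have Hg' : M 1 1 = (q * q^* + eps%:R * t * t^*) / nu%:R.
      by rewrite -[M 1 1](mulfK nu0) -Hv !cE sec -sse; field.
    have pts0 : p * t + s * q^* != 0.
      by apply: contraNneq d0 => h; rewrite H2' h mul0r.
    pose a1 : 'cV[algC]_2 := \col_i (if i == 0 then t^* else s^*).
    pose a2 : 'cV[algC]_2 := \col_i (if i == 0 then - q else p^*).
    have Hty : of_type M d a1 a2.
      apply/matrixP => i j; rewrite [j]ord1.
      case: (ord2_cases i) => ->; rewrite scaleE ?(perpE _).1 ?(perpE _).2 !MvE /a1 /a2 !mxE /=;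
        rewrite ?hb ?H1' ?Ha' ?Hg' H2' !cE; field; fside.
    exists a1, a2; split.
    + by apply: vecR_col => /=; apply: inR_conj.
    + by apply: vecR_col => /=; [apply: inR_opp|apply: inR_conj].
    + apply: (gen_ob (c := d^-1) Hh Hdet) => //.
        rewrite lamE -Hdd /Q2 /a1 !mxE /= hb ?H1' ?Ha' ?Hg' H2' !cE; field; fside.
      by rewrite -Hdd cV; field; fside.
    + exact: Hty.
move=> Hcn a1 Ha1 HQ.
have Ha i : inR D (a1 i 0) by apply: Ha1.
rewrite /Qform prodE in HQ.
have Hnu' : nu%:R = Q2 M (a1 0 0) (a1 1 0) (a1 0 0) (a1 1 0) / Dl.
  by rewrite HQ lamE mulfK.
have He' : eps%:R = (M 0 0 * M 1 1 - M 0 1 * (M 0 1)^*) / Dl.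
  by rewrite -hb -det2 Hdet [Dl * _]mulrC mulfK.
set w0 := (M *m a1) 0 0.
set w1 := (M *m a1) 1 0.
have Hw0 : w0 = M 0 0 * a1 0 0 + M 0 1 * a1 1 0 by rewrite /w0 MvE.
have Hw1 : w1 = (M 0 1)^* * a1 0 0 + M 1 1 * a1 1 0 by rewrite /w1 MvE hb.
have Rw0 : inR D w0 by rewrite Hw0; apply: inR_add; apply: inR_mul.
have Rw1 : inR D w1 by rewrite /w1 MvE; apply: inR_add; apply: inR_mul.
have [g [Rg HgI]] := Hcn _ (ideal2 Rw0 Rw1).
have [q0 [Rq0 Hq0]] : exists r, inR D r /\ w0 = g * r.
  apply/HgI; exists 1, 0; split; [exact: inR_1|exact: inR_0|ring].
have [q1 [Rq1 Hq1]] : exists r, inR D r /\ w1 = g * r.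
  apply/HgI; exists 0, 1; split; [exact: inR_0|exact: inR_1|ring].
have [X [Y [RX RY HXY]]] : exists X Y, [/\ inR D X, inR D Y & g = X * w0 + Y * w1].
  by apply/HgI; exists 1; split; [exact: inR_1|rewrite mulr1].
have g0 : g != 0.
  apply: contra_neq lam0 => g0; rewrite -HQ /Q2.
  rewrite -(MvE M a1 0) -(MvE M a1 1) -/w0 -/w1 Hq0 Hq1 g0; ring.
have gc0 : g^* != 0 by rewrite conjC_eq0.
pose n := g * g^* / Dl.
have nE : n = g * g^* / Dl by [].
have Rn : inR D n.
  have -> : n = X * X^* * (nu%:R * M 0 0 - eps%:R * (a1 1 0)^* * a1 1 0)
     + X * Y^* * (nu%:R * M 0 1 + eps%:R * (a1 1 0)^* * a1 0 0)
     + Y * X^* * (nu%:R * (M 0 1)^* + eps%:R * (a1 0 0)^* * a1 1 0)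
     + Y * Y^* * (nu%:R * M 1 1 - eps%:R * (a1 0 0)^* * a1 0 0).
    rewrite /n HXY Hw0 Hw1 Hnu' He' /Q2 hb !cE ?ha ?hg; field; fside.
  have RM i j : inR D (M i j) by [].
  have Rc i : inR D (a1 i 0)^* by apply: inR_conj.
  by rsolve.
have [y0 [Ky0 Hy0]] := Hsq.
rewrite -/Dl normCK in Hy0.
pose x0 := g * y0^* * ratr (Delta^-1).
have Kx0 : inK D x0.
  apply: inK_mul; last exact: inK_rat.
  by apply: inK_mul; [exact: Rg.1|exact: inK_conj].
have Nx0 : x0 * x0^* = n.
  have iD : ratr (Delta^-1) = Dl^-1 :> algC by rewrite fmorphV.
  have y00 : y0 != 0 by apply: contraNneq Dl0 => e; rewrite Hy0 e mul0r.
  have y0c : y0^* != 0 by rewrite conjC_eq0.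
  rewrite /x0 /n iD Hy0 !cE; field; fside.
have [a [b Hab]] := Kx0.
have da0 : ((denq a)%:~R : algC) != 0 by rewrite intr_eq0 denq_neq0.
have db0 : ((denq b)%:~R : algC) != 0 by rewrite intr_eq0 denq_neq0.
pose dd : int := (denq a * denq b)%R.
have dC0 : (dd%:~R : algC) != 0 by rewrite /dd intrM mulf_neq0.
pose a' := dd%:~R * x0.
have Ra' : inR D a'.
  have -> : a' = (numq a * denq b)%:~R + (numq b * denq a)%:~R * sqrtC D%:~R.
    rewrite /a' Hab /dd !intrM /ratr; field; fside.
  apply: inR_add; [exact: inR_int|apply: inR_mul; [exact: inR_int|exact: inR_sqrt]].
have [h [Rh HhI]] := Hcn _ (ideal2 Ra' (inR_int D dd)).
have [b1 [Rb1 Hb1]] : exists r, inR D r /\ a' = h * r.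
  apply/HhI; exists 1, 0; split; [exact: inR_1|exact: inR_0|ring].
have [a0 [Ra0 Ha0]] : exists r, inR D r /\ dd%:~R = h * r.
  apply/HhI; exists 0, 1; split; [exact: inR_0|exact: inR_1|ring].
have [r1 [s1 [Rr1 Rs1 Hrs]]] : exists X Y, [/\ inR D X, inR D Y & h = X * a' + Y * dd%:~R].
  by apply/HhI; exists 1; split; [exact: inR_1|rewrite mulr1].
have h0 : h != 0 by apply: contraNneq dC0 => e; rewrite Ha0 e mul0r.
have a00 : a0 != 0 by apply: contraNneq dC0 => e; rewrite Ha0 e mulr0.
have a0c0 : a0^* != 0 by rewrite conjC_eq0.
have hB : r1 * b1 + s1 * a0 = 1.
  apply: (mulfI h0); rewrite mulr1 {2}Hrs Hb1 Ha0; ring.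
have hx : b1 = a0 * x0.
  apply: (mulfI h0); rewrite -Hb1 /a' Ha0; ring.
have hbb : b1 * b1^* = n * (a0 * a0^*).
  by rewrite hx cM -Nx0; ring.
pose c := r1 * n * a0^* + s1 * b1^*.
have Rc : inR D c by rewrite /c; rsolve.
have hc : b1^* = a0 * c.
  have -> : a0 * c = r1 * (n * (a0 * a0^*)) + s1 * a0 * b1^* by rewrite /c; ring.
  rewrite -hbb.
  transitivity (b1^* * (r1 * b1 + s1 * a0)); first by rewrite hB mulr1.
  ring.
have hcc : c * c^* = n.
  apply: (mulfI (mulf_neq0 a00 a0c0)).
  have -> : a0 * a0^* * (c * c^*) = (a0 * c) * (a0 * c)^* by rewrite cM; ring.
  by rewrite -hc cK mulrC hbb mulrC.
clearbody c n.
pose a2 : 'cV[algC]_2 := \col_i (if i == 0 then - c * q1^* else c * q0^*).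
exists a2; split.
  by apply: vecR_col => /=; rsolve.
apply: (gen_ob (c := c / g^*) Hh Hdet HQ).
  apply/matrixP => i j; rewrite [j]ord1.
  case: (ord2_cases i) => ->; rewrite scaleE ?(perpE _).1 ?(perpE _).2 -?/w0 -?/w1 ?Hq0 ?Hq1 /a2 !mxE /= !cE;
    field; fside.
rewrite !cE.
transitivity (c * c^* * Dl / (g * g^*)); first by field; fside.
by rewrite hcc nE; field; fside.
Qed.
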